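(* Let $M:\mathcal I\to\mathbb R^{(s+1)m\times(s+1)m}$ be continuous, viewed as an $(s+1)\times(s+1)$ block matrix of $m\times m$ blocks. The following are equivalent: (1) $M$ is smoothly 1-full and has constant rank $r_M$; (2) $M$ has constant rank $r_M$ and $M(t)$ is 1-full for every $t\in\mathcal I$; (3) there is a continuous $H:\mathcal I\to\mathbb R^{sm\times sm}$ with constant rank such that $\ker M(t)=\{(z,w)\in\mathbb R^m\times\mathbb R^{sm}: z=0,\ w\in\ker H(t)\}$ for all $t$; (4) $M$ has constant rank $r_M$ and $[I_m\ 0\cdots0]\ker M(t)=\{0\}$ for all $t\in\mathcal I$.
   Context: A matrix $M\in\mathbb R^{(s+1)m\times(s+1)m}$ is 1-full if there is a nonsingular matrix $T$ with $TM=\begin{bmatrix}I_m&0\\0&H\end{bmatrix}$. A continuous $M:\mathcal I\to\mathbb R^{(s+1)m\times(s+1)m}$ is smoothly 1-full if there is a continuous pointwise nonsingular $T$ with $TM=\begin{bmatrix}I_m&0\\0&H\end{bmatrix}$. *)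

(* Defs.v *)
From HB Require Import structures.
From mathcomp Require Import all_boot all_order all_algebra.
From mathcomp Require Import all_classical all_reals topology normedtype.
Set Implicit Arguments. Unset Strict Implicit. Unset Printing Implicit Defensive.
Import Order.TTheory GRing.Theory Num.Theory.
Import numFieldNormedType.Exports.
Local Open Scope ring_scope.
Local Open Scope classical_set_scope.

Definition mx_continuous_on (R : realType) (p q : nat) (I : interval R)
  (F : R -> 'M[R]_(p, q)) : Prop :=
  forall (i : 'I_p) (j : 'I_q), {within [set` I], continuous (fun t : R => F t i j)}.

Definition one_full (R : realType) (m s : nat) (M : 'M[R]_(m + s * m)) : Prop :=
  exists T : 'M[R]_(m + s * m), T \in unitmx /\
    exists H : 'M[R]_(s * m), T *m M = block_mx 1%:M 0 0 H.

Definition smoothly_one_full (R : realType) (m s : nat) (I : interval R)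
  (M : R -> 'M[R]_(m + s * m)) : Prop :=
  exists T : R -> 'M[R]_(m + s * m),
    mx_continuous_on I T /\ (forall t, t \in I -> T t \in unitmx) /\
    exists H : R -> 'M[R]_(s * m),
      forall t, t \in I -> T t *m M t = block_mx 1%:M 0 0 (H t).

Definition const_rank (R : realType) (p : nat) (I : interval R)
  (M : R -> 'M[R]_p) : Prop :=
  exists r : nat, forall t, t \in I -> \rank (M t) = r.

(* Main.v *)
Require Import Defs.
From HB Require Import structures.
From mathcomp Require Import all_boot all_order all_algebra.
From mathcomp Require Import all_classical all_reals topology normedtype.
From mathcomp Require Import ring lra.
Import Order.TTheory GRing.Theory Num.Theory.
Import numFieldNormedType.Exports.
Set Implicit Arguments. Unset Strict Implicit. Unset Printing Implicit Defensive.
Local Open Scope ring_scope.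
Local Open Scope classical_set_scope.
From Stdlib Require Import Lia.
From mathcomp Require Import zify.
Section Cont.
Variable R : realType.
Implicit Types A : set R.
Definition wc A (f : R -> R) := {within A, continuous f}.
Lemma wc_add A f g : wc A f -> wc A g -> wc A (fun t => f t + g t).
Proof. move=> hf hg x; exact: (continuousD (hf x) (hg x)). Qed.
Lemma wc_mul A f g : wc A f -> wc A g -> wc A (fun t => f t * g t).
Proof. move=> hf hg x; exact: (continuousM (hf x) (hg x)). Qed.
Lemma wc_opp A f : wc A f -> wc A (fun t => - f t).
Proof. move=> hf x; exact: (continuousN (hf x)). Qed.
Lemma wc_cst A c : wc A (fun _ => c).
Proof. move=> x; exact: cvg_cst. Qed.
Lemma wc_inv A f : wc A f -> (forall t, A t -> f t != 0) -> wc A (fun t => (f t)^-1).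
Proof. move=> hf hA; apply/subspace_continuousP => x Ax.
have := (proj1 (subspace_continuousP _ _) hf) x Ax.
move=> h. apply: cvgV => //. exact: hA. Qed.
Lemma wc_ext A f g : (forall t, A t -> f t = g t) -> wc A f -> wc A g.
Proof. move=> e; apply: subspace_eq_continuous => t; rewrite inE => /e. by []. Qed.
Lemma wc_sub A B f : B `<=` A -> wc A f -> wc B f.
Proof. move=> h; exact: continuous_subspaceW. Qed.

Lemma wc_sum A (I : Type) (r : seq I) (P : pred I) (F : I -> R -> R) :
  (forall i, wc A (F i)) -> wc A (fun t => \sum_(i <- r | P i) F i t).
Proof.
move=> h; elim: r => [|i r IH].
  by apply: (wc_ext (f := fun _ => 0)) => [t _|]; [rewrite big_nil|exact: wc_cst].
apply: (wc_ext (f := fun t => (if P i then F i t else 0) + \sum_(j <- r | P j) F j t)).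
  by move=> t _; rewrite big_cons; case: (P i); rewrite ?add0r.
apply: wc_add => //; case: (P i) => //; exact: wc_cst.
Qed.

Lemma wc_prod A (I : Type) (r : seq I) (P : pred I) (F : I -> R -> R) :
  (forall i, wc A (F i)) -> wc A (fun t => \prod_(i <- r | P i) F i t).
Proof.
move=> h; elim: r => [|i r IH].
  by apply: (wc_ext (f := fun _ => 1)) => [t _|]; [rewrite big_nil|exact: wc_cst].
apply: (wc_ext (f := fun t => (if P i then F i t else 1) * \prod_(j <- r | P j) F j t)).
  by move=> t _; rewrite big_cons; case: (P i); rewrite ?mul1r.
apply: wc_mul => //; case: (P i) => //; exact: wc_cst.
Qed.

Definition mc A p q (F : R -> 'M[R]_(p, q)) := forall i j, wc A (fun t => F t i j).

Lemma mc_cst A p q (K : 'M[R]_(p, q)) : mc A (fun _ => K).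
Proof. move=> i j; exact: wc_cst. Qed.

Lemma mc_sub A B p q (F : R -> 'M[R]_(p, q)) : B `<=` A -> mc A F -> mc B F.
Proof. by move=> h hF i j; apply: wc_sub (hF i j). Qed.

Lemma mc_ext A p q (F G : R -> 'M[R]_(p, q)) :
  (forall t, A t -> F t = G t) -> mc A F -> mc A G.
Proof. by move=> e hF i j; apply: wc_ext (hF i j) => t /e ->. Qed.

Lemma mc_mul A p q r (F : R -> 'M[R]_(p, q)) (G : R -> 'M[R]_(q, r)) :
  mc A F -> mc A G -> mc A (fun t => F t *m G t).
Proof.
move=> hF hG i j; apply: (wc_ext (f := fun t => \sum_k F t i k * G t k j)).
  by move=> t _; rewrite mxE.
apply: wc_sum => k; exact: wc_mul.
Qed.

Lemma mc_add A p q (F G : R -> 'M[R]_(p, q)) :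
  mc A F -> mc A G -> mc A (fun t => F t + G t).
Proof.
move=> hF hG i j; apply: (wc_ext (f := fun t => F t i j + G t i j)).
  by move=> t _; rewrite mxE.
exact: wc_add.
Qed.

Lemma mc_opp A p q (F : R -> 'M[R]_(p, q)) : mc A F -> mc A (fun t => - F t).
Proof.
move=> hF i j; apply: (wc_ext (f := fun t => - F t i j)).
  by move=> t _; rewrite mxE.
exact: wc_opp.
Qed.

Lemma mc_scale A p q (c : R -> R) (F : R -> 'M[R]_(p, q)) :
  wc A c -> mc A F -> mc A (fun t => c t *: F t).
Proof.
move=> hc hF i j; apply: (wc_ext (f := fun t => c t * F t i j)).
  by move=> t _; rewrite mxE.
exact: wc_mul.
Qed.

Lemma mc_tr A p q (F : R -> 'M[R]_(p, q)) : mc A F -> mc A (fun t => (F t)^T).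
Proof.
move=> hF i j; apply: (wc_ext (f := fun t => F t j i)).
  by move=> t _; rewrite mxE.
exact: hF.
Qed.

Lemma mc_col A p1 p2 q (F : R -> 'M[R]_(p1, q)) (G : R -> 'M[R]_(p2, q)) :
  mc A F -> mc A G -> mc A (fun t => col_mx (F t) (G t)).
Proof.
move=> hF hG i j; case: (splitP i) => k hk.
  have -> : i = lshift p2 k by apply: val_inj.
  by apply: (wc_ext (f := fun t => F t k j)) => [t _|]; rewrite ?col_mxEu.
have -> : i = rshift p1 k by apply: val_inj.
by apply: (wc_ext (f := fun t => G t k j)) => [t _|]; rewrite ?col_mxEd.
Qed.

Lemma mc_row A p q1 q2 (F : R -> 'M[R]_(p, q1)) (G : R -> 'M[R]_(p, q2)) :
  mc A F -> mc A G -> mc A (fun t => row_mx (F t) (G t)).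
Proof.
move=> hF hG i j; case: (splitP j) => k hk.
  have -> : j = lshift q2 k by apply: val_inj.
  by apply: (wc_ext (f := fun t => F t i k)) => [t _|]; rewrite ?row_mxEl.
have -> : j = rshift q1 k by apply: val_inj.
by apply: (wc_ext (f := fun t => G t i k)) => [t _|]; rewrite ?row_mxEr.
Qed.

Lemma mc_rsub A p q1 q2 (F : R -> 'M[R]_(p, q1 + q2)) :
  mc A F -> mc A (fun t => rsubmx (F t)).
Proof.
move=> hF i j; apply: (wc_ext (f := fun t => F t i (rshift q1 j))).
  by move=> t _; rewrite mxE.
exact: hF.
Qed.

Lemma mc_dsub A p1 p2 q (F : R -> 'M[R]_(p1 + p2, q)) :
  mc A F -> mc A (fun t => dsubmx (F t)).
Proof.
move=> hF i j; apply: (wc_ext (f := fun t => F t (rshift p1 i) j)).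
  by move=> t _; rewrite mxE.
exact: hF.
Qed.

Lemma mc_drsub A p1 p2 q1 q2 (F : R -> 'M[R]_(p1 + p2, q1 + q2)) :
  mc A F -> mc A (fun t => drsubmx (F t)).
Proof. move=> hF; exact: (mc_rsub (mc_dsub hF)). Qed.

Lemma wc_det A n (F : R -> 'M[R]_n) : mc A F -> wc A (fun t => \det (F t)).
Proof.
move=> hF; rewrite /determinant; apply: wc_sum => s.
apply: wc_mul; first exact: wc_cst.
apply: wc_prod => i; exact: hF.
Qed.

Lemma mc_adj A n (F : R -> 'M[R]_n) : mc A F -> mc A (fun t => \adj (F t)).
Proof.
move=> hF i j; apply: (wc_ext (f := fun t => cofactor (F t) j i)).
  by move=> t _; rewrite mxE.
rewrite /cofactor; apply: wc_mul; first exact: wc_cst.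
apply: wc_det => k l; apply: (wc_ext (f := fun t => F t (lift j k) (lift i l))).
  by move=> t _; rewrite !mxE.
exact: hF.
Qed.

Lemma mc_inv A n (F : R -> 'M[R]_n) : mc A F -> (forall t, A t -> F t \in unitmx) ->
  mc A (fun t => invmx (F t)).
Proof.
move=> hF hU; apply: (mc_ext (F := fun t => (\det (F t))^-1 *: \adj (F t))).
  by move=> t /hU h; rewrite /invmx h.
apply: mc_scale; last exact: mc_adj.
apply: wc_inv; first exact: wc_det.
by move=> t /hU; rewrite unitmxE unitfE.
Qed.
End Cont.

Section Cover.
Variable R : realType.
Implicit Types E : set R.

Lemma right_seq E a : E a -> exists r : nat -> R,
  [/\ (forall n, E (r n)), (forall n, a <= r n), (forall n, r n <= r n.+1) &
   forall t, E t -> exists n, t < r n \/ (t <= r n /\ forall y, E y -> y <= t)].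
Proof.
move=> Ea.
pose P n z := E z /\ (a + n%:R <= z \/
   ((forall y, E y -> y - (n.+1%:R)^-1 < z) /\
    ((exists u, E u /\ forall y, E y -> y <= u) -> forall y, E y -> y <= z))).
have hP : forall n, exists z, P n z.
  move=> n; have [[z [Ez hz]]|hno] := pselect (exists z, E z /\ a + n%:R <= z).
    by exists z; split => //; left.
  have hlt : forall y, E y -> y < a + n%:R.
    move=> y Ey; rewrite ltNge; apply/negP => h; apply: hno; by exists y.
  have [[u [Eu hu]]|hnomax] := pselect (exists u, E u /\ forall y, E y -> y <= u).
    exists u; split => //; right; split => // y Ey.
    have := hu y Ey; have : 0 < (n.+1%:R : R)^-1 by rewrite invr_gt0 ltr0n.
    move=> h1 h2; by rewrite ltrBlDr (le_lt_trans h2) // ltrDl.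
  have hsup : has_sup E by split; [exists a | exists (a + n%:R) => y /hlt/ltW].
  have he : 0 < (n.+1%:R : R)^-1 by rewrite invr_gt0 ltr0n.
  have [z Ez hz] := sup_adherent he hsup.
  exists z; split => //; right; split; last first.
    by move=> [u [Eu hu]]; exfalso; apply: hnomax; exists u.
  move=> y Ey; apply: le_lt_trans hz; by rewrite lerD2r; apply: sup_upper_bound.
have [r' hr'] : exists r' : nat -> R, forall n, P n (r' n).
  by exists (fun n => proj1_sig (cid (hP n))) => n; exact: (proj2_sig (cid (hP n))).
pose r := fix r n := if n is k.+1 then Num.max (r k) (r' k.+1) else Num.max a (r' 0%N).
have Emax : forall x y, E x -> E y -> E (Num.max x y).
  by move=> x y Ex Ey; rewrite maxEle; case: ifP.
have rS : forall n, r n.+1 = Num.max (r n) (r' n.+1) by [].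
have r'r : forall n, r' n <= r n.
  by case=> [|n]; rewrite ?rS /= le_max lexx orbT.
exists r; split.
- elim=> [|n IH]; first by apply: Emax => //; case: (hr' 0%N).
  by rewrite rS; apply: Emax => //; case: (hr' n.+1).
- elim=> [|n IH]; first by rewrite /= le_max lexx.
  by rewrite rS le_max IH.
- by move=> n; rewrite rS le_max lexx.
move=> t Et.
have [[y0 [Ey0 ty0]]|hmax] := pselect (exists y0, E y0 /\ t < y0).
  set d := y0 - t; have dpos : 0 < d by rewrite subr_gt0.
  pose n := Num.bound (`|t - a| + d^-1).
  have hn := @archi_boundP R (`|t - a| + d^-1).
  have : `|t - a| + d^-1 < n%:R by apply: hn; rewrite addr_ge0 // invr_ge0 ltW.
  move=> hb; exists n; left; apply: (lt_le_trans _ (r'r n)).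
  have ta : t - a < n%:R.
    apply: le_lt_trans hb; apply: le_trans (ler_norm _) _; rewrite lerDl invr_ge0 ltW //.
  have dn : d^-1 < n.+1%:R.
    apply: (@le_lt_trans _ _ (`|t - a| + d^-1)); first by rewrite lerDr.
    apply: (lt_trans hb); by rewrite ltr_nat.
  have en : (n.+1%:R : R)^-1 < d by rewrite invf_plt // posrE ltr0n.
  case: (hr' n) => _ [h|[h _]].
    by apply: lt_le_trans h; rewrite -ltrBlDl.
  have := h y0 Ey0; apply: le_lt_trans.
  rewrite lerBrDr -lerBrDl; apply: ltW; by rewrite /d in en.
have hle : forall y, E y -> y <= t.
  by move=> y Ey; rewrite leNgt; apply/negP => h; apply: hmax; exists y.
pose n := Num.bound (`|t - a|).
have hb : `|t - a| < n%:R by apply: archi_boundP.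
exists n; right; split => //.
apply: le_trans (r'r n).
case: (hr' n) => _ [h|[_ h]].
  exfalso; have := hle _ (proj1 (hr' n)); apply/negP; rewrite -ltNge.
  apply: lt_le_trans h; rewrite -ltrBlDl; apply: le_lt_trans hb; exact: ler_norm.
by apply: h => //; exists t.
Qed.

Lemma incr_le (f : nat -> R) : (forall n, f n <= f n.+1) -> forall n k, (n <= k)%N -> f n <= f k.
Proof.
move=> h n k /subnK <-; elim: (k - n)%N => [|j IH]; first by rewrite add0n.
by apply: le_trans IH _; rewrite addSn.
Qed.

Lemma cover_seq E a : E a -> exists l r : nat -> R,
  [/\ (forall n, E (l n) /\ E (r n)), (forall n, l n <= a <= r n),
      (forall n, l n.+1 <= l n /\ r n <= r n.+1) &
   forall t, E t -> exists n, exists2 d, 0 < d &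
       forall y, E y -> `|y - t| < d -> l n <= y <= r n].
Proof.
move=> Ea.
have [r [Er ar rinc rcov]] := right_seq Ea.
have Ea' : [set x | E (- x)] (- a) by rewrite /= opprK.
have [r' [Er' ar' rinc' rcov']] := right_seq Ea'.
exists (fun n => - r' n), r; split.
- by move=> n; split => //; exact: Er'.
- by move=> n; rewrite ar andbT lerNl; exact: ar'.
- by move=> n; rewrite lerN2 rinc rinc'.
move=> t Et.
have [n1 hn1] := rcov t Et.
have Et' : [set x | E (- x)] (- t) by rewrite /= opprK.
have [n2 hn2] := rcov' _ Et'.
exists (maxn n1 n2).
have hr : r n1 <= r (maxn n1 n2) by apply: incr_le => //; exact: leq_maxl.
have hl : r' n2 <= r' (maxn n1 n2) by apply: incr_le => //; exact: leq_maxr.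
have [d1 d1p hd1] : exists2 d1, 0 < d1 & forall y, E y -> y < t + d1 -> y <= r (maxn n1 n2).
  case: hn1 => [h|[h1 h2]].
    exists (r n1 - t); first by rewrite subr_gt0.
    by move=> y _; rewrite addrC subrK => /ltW/le_trans; apply.
  exists 1 => // y Ey _; exact: le_trans (h2 _ Ey) (le_trans h1 hr).
have [d2 d2p hd2] : exists2 d2, 0 < d2 & forall y, E y -> t - d2 < y -> - r' (maxn n1 n2) <= y.
  case: hn2 => [h|[h1 h2]].
    exists (t + r' n2); first by rewrite -ltrBlDl sub0r.
    move=> y _; rewrite opprD addrA subrr add0r lerNl => hy.
    apply: le_trans hl; rewrite -lerNl; exact: ltW.
  exists 1 => // y Ey _.
  rewrite lerNl; apply: le_trans _ (le_trans h1 hl); apply: h2; by rewrite /= opprK.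
exists (Num.min d1 d2); first by rewrite lt_min d1p d2p.
move=> y Ey; rewrite lt_min => /andP[h1 h2]; apply/andP; split.
  apply: hd2 => //; move: h2; rewrite ltr_norml => /andP[h2 _]; rewrite ltrBlDr -ltrBlDl //.
  by move: h2; rewrite ltrNl opprB.
apply: hd1 => //; move: h1; rewrite ltr_norml => /andP[_ h1]; by rewrite -ltrBlDl.
Qed.
End Cover.


Lemma dep_seq (X : Type) (P : nat -> X -> Prop) (Q : nat -> X -> X -> Prop) :
  (exists x, P 0%N x) -> (forall n x, P n x -> exists y, P n.+1 y /\ Q n x y) ->
  exists u : nat -> X, forall n, P n (u n) /\ Q n (u n) (u n.+1).
Proof.
move=> h0 hs.
pose g := fix g n : {x | P n x} := if n is k.+1 then
   let: exist x hx := g k in exist _ (proj1_sig (cid (hs k x hx))) (proj1 (proj2_sig (cid (hs k x hx))))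
   else cid h0.
exists (fun n => proj1_sig (g n)) => n; split; first exact: proj2_sig (g n).
rewrite [g n.+1]/=; case: (g n) => x hx /=.
exact: proj2 (proj2_sig (cid (hs n x hx))).
Qed.

Section Glue.
Variable R : realType.
Variables (p q : nat).
Variable Good : R -> 'M[R]_(p, q) -> Prop.
Variable E : set R.
Hypothesis hE : is_interval E.
Hypothesis HG : forall t (A B : 'M[R]_(p, q)), E t -> Good t A -> Good t B ->
  exists K : 'M[R]_p, K *m B = A /\ forall u Z, E u -> Good u Z -> Good u (K *m Z).
Hypothesis HL : forall t0, E t0 -> exists2 d, 0 < d &
  exists f, mc E f /\ forall t, E t -> `|t - t0| < d -> Good t (f t).

Definition Ic (x y : R) := [set t : R | x <= t <= y].
Definition Seg x y (f : R -> 'M[R]_(p, q)) :=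
  mc (Ic x y) f /\ forall t, x <= t <= y -> Good t (f t).

Lemma Ic_closed x y : closed (Ic x y).
Proof.
have -> : Ic x y = [set t | x <= t] `&` [set t | t <= y].
  by rewrite predeqE => t; rewrite /Ic /=; split => [/andP[]|[-> ->]].
by apply: closedI; [exact: closed_ge | exact: closed_le].
Qed.

Lemma IcE x y : E x -> E y -> Ic x y `<=` E.
Proof. by move=> Ex Ey t /andP[h1 h2]; apply: (hE Ex Ey); rewrite h1 h2. Qed.

Lemma glue x m y f g : x <= m -> m <= y -> Seg x m f -> Seg m y g -> f m = g m ->
  Seg x y (fun t => if t <= m then f t else g t).
Proof.
move=> xm my [cf gf] [cg gg] e; split; last first.
  move=> t /andP[h1 h2]; case: ifPn => h.
    by apply: gf; rewrite h1 h.
  by apply: gg; rewrite h2 andbT ltW // ltNge.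
have -> : Ic x y = Ic x m `|` Ic m y.
  rewrite predeqE => t; rewrite /Ic /=; split.
    move=> /andP[h1 h2]; case: (leP t m) => h; [left|right]; by rewrite ?h1 ?h2 ?h // ltW.
  by case=> /andP[h1 h2]; rewrite ?(le_trans xm h1) ?(le_trans h2 my) ?h1 ?h2.
move=> i j; apply: withinU_continuous; try exact: Ic_closed.
  by apply: (wc_ext (f := fun t => f t i j)) (cf i j) => t /= /andP[_ ->].
apply: (wc_ext (f := fun t => g t i j)) (cg i j) => t /= /andP[h1 h2].
case: ifPn => // h; have -> : t = m by apply/eqP; rewrite eq_le h h1.
by rewrite e.
Qed.

Lemma Seg_mul x y f (K : 'M[R]_p) : E x -> E y ->
  (forall u Z, E u -> Good u Z -> Good u (K *m Z)) -> Seg x y f ->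
  Seg x y (fun t => K *m f t).
Proof.
move=> Ex Ey hK [cf gf]; split; first by apply: mc_mul => //; exact: mc_cst.
move=> t ht; apply: hK; [exact: (IcE Ex Ey) | exact: gf].
Qed.

Lemma Seg_local t0 : E t0 -> exists2 d, 0 < d & exists f,
  forall x y, E x -> E y -> t0 - d < x -> y < t0 + d -> Seg x y f.
Proof.
move=> Et0; have [d dp [f [cf gf]]] := HL Et0; exists d => //; exists f.
move=> x y Ex Ey h1 h2; split; first exact: mc_sub (IcE Ex Ey) cf.
move=> t /andP[ht1 ht2]; apply: gf; first by apply: (IcE Ex Ey); rewrite /Ic /= ht1 ht2.
rewrite ltr_norml; apply/andP; split; lra.
Qed.

Lemma glueK x m y f g : E x -> E y -> x <= m -> m <= y -> Seg x m f -> Seg m y g ->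
  exists h, Seg x y h /\ forall t, x <= t <= m -> h t = f t.
Proof.
move=> Ex Ey xm my sf sg.
have Em : E m by apply: (hE Ex Ey); rewrite xm my.
have [K [eK hK]] := HG Em ((proj2 sf) m ltac:(by rewrite xm lexx)) ((proj2 sg) m ltac:(by rewrite my lexx)).
exists (fun t => if t <= m then f t else K *m g t); split; last by move=> t /andP[_ ->].
apply: glue => //; first exact: Seg_mul.
Qed.

Lemma Seg_all x y : E x -> E y -> x <= y -> exists f, Seg x y f.
Proof.
move=> Ex Ey xy.
pose S := [set z | x <= z <= y /\ exists f, Seg x z f].
have Sx : S x.
  split; first by rewrite lexx xy.
  have [d dp [f hf]] := Seg_local Ex; exists f; apply: hf => //;
    rewrite ?ltrBlDr ?ltrDl //; lra.
have hsup : has_sup S by split; [exists x | exists y => z [/andP[_ ->]]].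
set c := sup S.
have xc : x <= c by apply: sup_upper_bound.
have cy : c <= y by apply: ge_sup; [exists x | move=> z [/andP[_ ->]]].
have Ec : E c by apply: (hE Ex Ey); rewrite xc cy.
have [d dp [g hg]] := Seg_local Ec.
have [z [/andP[xz zy] [f hf]] hz] := sup_adherent dp hsup.
have zc : z <= c by apply: sup_upper_bound => //; split; [rewrite xz zy | exists f].
have Ez : E z by apply: (hE Ex Ey); rewrite xz zy.
have [hyc|hyc] := ltP y (c + d).
  have sg : Seg z y g by apply: hg => //; lra.
  have [h [sh _]] := glueK Ex Ey xz zy hf sg; by exists h.
set w := c + d / 2.
have Ew : E w by apply: (hE Ex Ey); rewrite /w; apply/andP; split; lra.
have zw : z <= w by rewrite /w; lra.
have sg : Seg z w g by apply: hg => //; rewrite /w; lra.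
have [h [sh _]] := glueK Ex Ew xz zw hf sg.
have : w <= c by apply: sup_upper_bound => //; split; [rewrite /w; apply/andP; split; lra | exists h].
rewrite /w; lra.
Qed.

Lemma Seg_extend x' x y y' f : E x' -> E y' -> x' <= x -> x <= y -> y <= y' ->
  Seg x y f -> exists h, Seg x' y' h /\ forall t, x <= t <= y -> h t = f t.
Proof.
move=> Ex' Ey' x'x xy yy' sf.
have Ex : E x by apply: (hE Ex' Ey'); rewrite x'x (le_trans xy yy').
have Ey : E y by apply: (hE Ex' Ey'); rewrite yy' (le_trans x'x xy).
have [g sg] := Seg_all Ey Ey' yy'.
have [h1 [sh1 eh1]] := glueK Ex Ey' xy yy' sf sg.
have [g2 sg2] := Seg_all Ex' Ex x'x.
have Ex'x := proj2 sg2 x ltac:(by rewrite x'x lexx).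
have Exx := proj2 sh1 x ltac:(by rewrite lexx (le_trans xy yy')).
have [K [eK hK]] := HG Ex Exx Ex'x.
exists (fun t => if t <= x then K *m g2 t else h1 t); split.
  apply: glue => //; first exact: le_trans yy'.
  exact: Seg_mul.
move=> t /andP[h1t h2t]; case: ifPn => h.
  have -> : t = x by apply/eqP; rewrite eq_le h h1t.
  by rewrite eK eh1 // lexx.
by rewrite eh1 // h2t andbT.
Qed.

Lemma global_good : exists f, mc E f /\ forall t, E t -> Good t (f t).
Proof.
have [[a Ea]|nE] := pselect (exists a, E a); last first.
  exists (fun _ => 0); split; last by move=> t Et; exfalso; apply: nE; exists t.
  by move=> i j; apply/subspace_continuousP => x Ex; exfalso; apply: nE; exists x.
have [l [r [Elr lar mono cov]]] := cover_seq Ea.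
have [u hu] : exists u : nat -> R -> 'M[R]_(p, q), forall n,
    Seg (l n) (r n) (u n) /\ forall t, l n <= t <= r n -> u n.+1 t = u n t.
  apply: (dep_seq (P := fun n f => Seg (l n) (r n) f)
                  (Q := fun n f g => forall t, l n <= t <= r n -> g t = f t)).
    apply: Seg_all; [exact: (proj1 (Elr 0%N)) | exact: (proj2 (Elr 0%N))|].
    by have /andP[h1 h2] := lar 0%N; exact: le_trans h1 h2.
  move=> n f sf; apply: (Seg_extend _ _ _ _ _ sf).
  - exact: (proj1 (Elr n.+1)).
  - exact: (proj2 (Elr n.+1)).
  - exact: (proj1 (mono n)).
  - by have /andP[h1 h2] := lar n; exact: le_trans h1 h2.
  - exact: (proj2 (mono n)).
have lmono : forall n k, (n <= k)%N -> l k <= l n.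
  move=> n k nk; rewrite -lerN2; apply: (incr_le (f := fun n => - l n)) nk.
  by move=> j; rewrite lerN2; exact: (proj1 (mono j)).
have rmono : forall n k, (n <= k)%N -> r n <= r k.
  by move=> n k nk; apply: (incr_le (f := r)) nk => j; exact: (proj2 (mono j)).
have coh : forall n k t, (n <= k)%N -> l n <= t <= r n -> u k t = u n t.
  move=> n k t /subnK <- /andP[h1 h2]; elim: (k - n)%N => [|j IH]; first by rewrite add0n.
  rewrite addSn -IH; apply: (proj2 (hu _)).
  by rewrite (le_trans (lmono _ _ (leq_addl j n)) h1) (le_trans h2 (rmono _ _ (leq_addl j n))).
have coh2 : forall n k t, l n <= t <= r n -> l k <= t <= r k -> u k t = u n t.
  move=> n k t hn hk; rewrite -(coh k (maxn n k) t) ?leq_maxr // (coh n (maxn n k) t) ?leq_maxl //.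
pose cov_at t n := exists2 d, 0 < d & forall y, E y -> `|y - t| < d -> l n <= y <= r n.
pose N t := match pselect (exists n, cov_at t n) with left h => proj1_sig (cid h) | right _ => 0%N end.
have hN : forall t, E t -> cov_at t (N t).
  move=> t Et; rewrite /N; case: pselect => [h|h]; first exact: proj2_sig (cid h).
  by exfalso; apply: h; exact: cov.
have inN : forall t, E t -> l (N t) <= t <= r (N t).
  by move=> t Et; have [d dp hd] := hN t Et; apply: hd => //; rewrite subrr normr0.
pose S t := u (N t) t.
have key : forall n y, E y -> l n <= y <= r n -> S y = u n y.
  by move=> n y Ey hy; rewrite /S (coh2 n (N y) y) // inN.
exists S; split; last first.
  by move=> t Et; rewrite /S; apply: (proj2 (proj1 (hu (N t)))); exact: inN.
move=> i j; apply/subspace_continuousP => x Ex.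
have [d dp hd] := hN x Ex; set n := N x in hd.
have hc := (proj1 (subspace_continuousP _ _) (proj1 (proj1 (hu n)) i j)) x (hd x Ex ltac:(by rewrite subrr normr0)).
have kx := key n x Ex (hd x Ex ltac:(by rewrite subrr normr0)).
rewrite /from_subspace kx.
move=> B hB.
have h : \forall t \near x, Ic (l n) (r n) t -> B (u n t i j) := hc B hB.
suff : \forall t \near x, E t -> B (S t i j) by [].
have hb : \forall y \near x, ball x d y by apply: near_ball.
apply: filterS2 h hb => y hy hby Ey.
have hyd : `|y - x| < d by move: hby; rewrite /ball /= distrC.
by rewrite /= (key n y Ey (hd y Ey hyd)); apply: hy; exact: hd.
Qed.
End Glue.

Section Frame.
Variable R : realType.

Lemma wc_nz (E : set R) (g : R -> R) t0 : wc E g -> E t0 -> g t0 != 0 ->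
  exists2 d, 0 < d & forall t, E t -> `|t - t0| < d -> g t != 0.
Proof.
move=> hg Et0 nz.
have h := (proj1 (subspace_continuousP _ _) hg) t0 Et0.
have hB : nbhs (g t0) (ball (g t0) `|g t0|) by apply: nbhsx_ballx; rewrite normr_gt0.
have := h _ hB; rewrite /from_subspace => /nbhs_ballP [d dp hd].
exists d => // t Et htd.
have : ball t0 d t by rewrite /ball /= distrC.
move=> /hd /(_ Et); rewrite /ball /=.
apply: contraTneq => ->; by rewrite subr0 ltxx.
Qed.

Lemma rowfree_inj m n (A : 'M[R]_(m, n)) :
  (forall x : 'rV_m, x *m A = 0 -> x = 0) -> row_free A.
Proof.
move=> h; rewrite -kermx_eq0; apply/eqP/row_matrixP => i.
by rewrite row0; apply: h; rewrite -row_mul mulmx_ker row0.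
Qed.

Lemma rv_sq0 n (y : 'rV[R]_n) : y *m y^T = 0 -> y = 0.
Proof.
move=> hy; apply/matrixP => i j; rewrite ord1 [RHS]mxE.
move/matrixP: hy => /(_ 0 0); rewrite [LHS]mxE [RHS]mxE => /eqP.
rewrite psumr_eq0 => [/allP /(_ j (mem_index_enum j)) /=|l _]; last first.
  by rewrite [y^T _ _]mxE -expr2 sqr_ge0.
by rewrite [y^T _ _]mxE mulf_eq0 orbb => /eqP.
Qed.

Lemma gram_unit k n (N : 'M[R]_(k, n)) : row_free N -> N *m N^T \in unitmx.
Proof.
move=> fN; rewrite -row_free_unit; apply: rowfree_inj => x hx.
have hy : (x *m N) *m (x *m N)^T = 0 by rewrite trmx_mul !mulmxA -(mulmxA x) hx mul0mx.
have y0 := rv_sq0 hy.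
by apply: (row_free_inj fN); rewrite y0 mul0mx.
Qed.

Lemma gram_free k n (N : 'M[R]_(k, n)) : N *m N^T \in unitmx -> row_free N.
Proof.
rewrite -row_free_unit /row_free => /eqP h.
apply/eqP/anti_leq; rewrite rank_leq_row /= -[X in (X <= _)%N]h.
exact: mxrankM_maxl.
Qed.

Theorem frame (E : set R) (hE : is_interval E) n k (Q : R -> 'M[R]_n) :
  mc E Q -> (forall t, E t -> \rank (Q t) = k) ->
  exists N : R -> 'M[R]_(k, n), mc E N /\
    forall t, E t -> (N t == Q t)%MS /\ N t *m (N t)^T \in unitmx.
Proof.
move=> hQ hrk.
apply: (global_good (Good := fun t N => (N == Q t)%MS /\ N *m N^T \in unitmx) hE).
  move=> t A B Et [hA gA] [hB gB].
  have hAB : (A == B)%MS.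
    by apply/eqmxP; exact: eqmx_trans (eqmxP hA) (eqmx_sym (eqmxP hB)).
  case/eqmxMunitP: hAB => K Ku eK; exists K; split; first by rewrite eK.
  move=> u Z Eu [hZ gZ]; split.
    have hKZ : (K *m Z == Z)%MS by apply/eqmxMunitP; exists K.
    by apply/eqmxP; exact: eqmx_trans (eqmxP hKZ) (eqmxP hZ).
  have -> : (K *m Z) *m (K *m Z)^T = K *m (Z *m Z^T) *m K^T by rewrite trmx_mul !mulmxA.
  by rewrite !unitmx_mul unitmx_tr Ku gZ.
move=> t0 Et0.
have hk := hrk t0 Et0; subst k.
have sB : (row_base (Q t0) <= Q t0)%MS by rewrite eq_row_base.
case/submxP: sB => Psi ePsi.
pose f t := Psi *m Q t.
have cf : mc E f by apply: mc_mul => //; exact: mc_cst.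
have cg : wc E (fun t => \det (f t *m (f t)^T)).
  by apply: wc_det; apply: mc_mul => //; exact: mc_tr.
have nz : \det (f t0 *m (f t0)^T) != 0.
  by rewrite -unitfE -unitmxE /f -ePsi; apply: gram_unit; exact: row_base_free.
have [d dp hd] := wc_nz cg Et0 nz.
exists d => //; exists f; split => // t Et htd.
have gu : f t *m (f t)^T \in unitmx by rewrite unitmxE unitfE; exact: hd.
split => //.
have sub : (f t <= Q t)%MS by exact: submxMl.
have := mxrank_leqif_eq sub; case => _ <-.
have /eqP -> := gram_free gu.
by rewrite hrk.
Qed.
End Frame.

Section Main.
Variable R : realType.
Variables m s : nat.
Local Notation n := (m + s * m)%N.
Definition P0 : 'M[R]_(m, n) := row_mx 1%:M 0.

Lemma P0P0T : P0 *m P0^T = 1%:M.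
Proof. by rewrite /P0 tr_row_mx mul_row_col trmx1 mulmx1 trmx0 mulmx0 addr0. Qed.

Lemma lsub_P0 p (A : 'M[R]_(p, n)) : lsubmx A = A *m P0^T.
Proof. by rewrite -{2}(hsubmxK A) /P0 tr_row_mx mul_row_col trmx1 mulmx1 trmx0 mulmx0 addr0. Qed.

Lemma cols_eq0 p q (A : 'M[R]_(p, q)) : (forall j, A *m (delta_mx j 0 : 'cV_q) = 0) -> A = 0.
Proof.
move=> h; apply/matrixP => i j.
by move/matrixP: (h j) => /(_ i 0); rewrite -colE !mxE.
Qed.

Lemma main_constr (E : set R) (hE : is_interval E) (M : R -> 'M[R]_n) r :
  mc E M -> (forall t, E t -> \rank (M t) = r) -> (forall t, E t -> (P0 <= M t)%MS) ->
  exists T : R -> 'M[R]_n, mc E T /\ (forall t, E t -> T t \in unitmx) /\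
    exists H : R -> 'M[R]_(s * m), forall t, E t -> T t *m M t = block_mx 1%:M 0 0 (H t).
Proof.
move=> hM hr hP.
have [N1 [cN1 hN1]] := frame hE (mc_tr hM) (k := r) (fun t Et => etrans (mxrank_tr _) (hr t Et)).
pose G1 t := N1 t *m (N1 t)^T.
pose Y t := invmx (G1 t) *m N1 t *m M t.
have eM : forall t, E t -> M t = (N1 t)^T *m Y t.
  move=> t Et; have [e1 u1] := hN1 t Et.
  have : ((M t)^T <= N1 t)%MS by rewrite (eqmxP e1) submx_refl.
  case/submxP => A eA.
  have -> : M t = (N1 t)^T *m A^T by rewrite -trmx_mul -eA trmxK.
  rewrite /Y /G1 -[M t]trmxK eA trmx_mul (mulmxA (_ *m N1 t)) -(mulmxA (invmx _)).
  by rewrite mulVmx // mul1mx.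
have hG1 : forall t, E t -> G1 t \in unitmx by move=> t /hN1 [].
have rY : forall t, E t -> row_free (Y t).
  move=> t Et; rewrite /row_free; apply/eqP/anti_leq; rewrite rank_leq_row /=.
  by rewrite -{1}(hr t Et) (eM t Et); exact: mxrankM_maxr.
pose GY t := Y t *m (Y t)^T.
have hGY : forall t, E t -> GY t \in unitmx by move=> t /rY; exact: gram_unit.
pose T1 t := P0 *m (Y t)^T *m invmx (GY t) *m invmx (G1 t) *m N1 t.
have T1M : forall t, E t -> T1 t *m M t = P0.
  move=> t Et.
  have : (P0 <= Y t)%MS.
    apply: submx_trans (hP t Et) _; rewrite (eM t Et); exact: submxMl.
  case/submxP => W eW.
  have -> : T1 t *m M t = P0 *m (Y t)^T *m invmx (GY t) *m Y t by rewrite /T1 /Y !mulmxA.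
  rewrite {1}eW -(mulmxA W) -/(GY t) -(mulmxA W) mulmxV ?mulmx1 ?hGY //.
have cG1 : mc E G1 by apply: mc_mul => //; exact: mc_tr.
have cY : mc E Y by apply: mc_mul => //; apply: mc_mul => //; exact: mc_inv.
have cGY : mc E GY by apply: mc_mul => //; exact: mc_tr.
have cT1 : mc E T1.
  apply: mc_mul => //; apply: mc_mul; last exact: mc_inv.
  apply: mc_mul; last exact: mc_inv.
  apply: mc_mul; [exact: mc_cst | exact: mc_tr].
pose C t := M t *m P0^T.
have T1C : forall t, E t -> T1 t *m C t = 1%:M by move=> t Et; rewrite /C mulmxA T1M // P0P0T.
pose Q2 t := 1%:M - C t *m T1 t.
have Q2C : forall t, E t -> Q2 t *m C t = 0.
  by move=> t Et; rewrite /Q2 mulmxBl mul1mx -mulmxA T1C // mulmx1 subrr.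
have cC : mc E C by apply: mc_mul => //; exact: mc_cst.
have cQ2 : mc E Q2 by apply: mc_add; [exact: mc_cst | apply: mc_opp; exact: mc_mul].
have rQ2 : forall t, E t -> \rank (Q2 t) = (s * m)%N.
  move=> t Et.
  have e : (Q2 t == kermx (C t))%MS.
    apply/andP; split; first by rewrite sub_kermx Q2C.
    have e : kermx (C t) = kermx (C t) *m Q2 t.
      by rewrite /Q2 mulmxBr mulmx1 mulmxA mulmx_ker mul0mx subr0.
    rewrite {1}e; exact: submxMl.
  rewrite (eqmx_rank e) mxrank_ker.
  have -> : \rank (C t) = m.
    apply/anti_leq; rewrite rank_leq_col /=.
    by rewrite -{1}(mxrank1 R m) -(T1C t Et); exact: mxrankM_maxr.
  by rewrite addKn.
have [N2 [cN2 hN2]] := frame hE cQ2 rQ2.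
have N2C : forall t, E t -> N2 t *m C t = 0.
  move=> t Et; have [e2 _] := hN2 t Et.
  have : (N2 t <= Q2 t)%MS by rewrite (eqmxP e2) submx_refl.
  by case/submxP => D ->; rewrite -mulmxA Q2C // mulmx0.
exists (fun t => col_mx (T1 t) (N2 t)); split; first exact: mc_col.
split.
  move=> t Et; rewrite -row_free_unit; apply: rowfree_inj => x.
  rewrite -(hsubmxK x) mul_row_col => h.
  have h1 : lsubmx x = 0.
    have h' : (lsubmx x *m T1 t + rsubmx x *m N2 t) *m C t = 0 by rewrite h mul0mx.
    by rewrite mulmxDl -(mulmxA (lsubmx x)) -(mulmxA (rsubmx x)) T1C // N2C // mulmx1 mulmx0 addr0 in h'.
  rewrite h1 mul0mx add0r in h.
  have h2 : rsubmx x = 0.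
    have [_ u2] := hN2 t Et.
    have h' : rsubmx x *m N2 t *m ((N2 t)^T *m invmx (N2 t *m (N2 t)^T)) = 0 by rewrite h mul0mx.
    by rewrite mulmxA -(mulmxA (rsubmx x) (N2 t)) -(mulmxA (rsubmx x)) mulmxV // mulmx1 in h'.
  by rewrite h1 h2 row_mx0.
exists (fun t => rsubmx (N2 t *m M t)) => t Et.
rewrite mul_col_mx T1M // block_mxEv /P0; congr col_mx.
rewrite -{1}(hsubmxK (N2 t *m M t)); congr row_mx.
by rewrite lsub_P0 -mulmxA N2C.
Qed.
End Main.

Section Fin.
Variable R : realType.
Variables m s : nat.
Local Notation n := (m + s * m)%N.

Lemma P0x (x : 'cV[R]_n) : P0 R m s *m x = usubmx x.
Proof. by rewrite -{1}(vsubmxK x) /P0 mul_row_col mul1mx mul0mx addr0. Qed.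

Lemma blockx (H : 'M[R]_(s * m)) (x : 'cV[R]_n) :
  block_mx 1%:M 0 0 H *m x = col_mx (usubmx x) (H *m dsubmx x).
Proof.
by rewrite -{1}(vsubmxK x) mul_block_col !mul1mx !mul0mx addr0 add0r.
Qed.

Lemma ker_sub (A : 'M[R]_n) : (forall x : 'cV_n, A *m x = 0 -> P0 R m s *m x = 0) ->
  (P0 R m s <= A)%MS.
Proof.
move=> h; rewrite submxE; apply/eqP; apply: cols_eq0 => j.
rewrite -mulmxA; apply: h; by rewrite mulmxA mulmx_coker mul0mx.
Qed.

Lemma rank_from_ker (A : 'M[R]_n) (B : 'M[R]_(s * m)) :
  (forall x : 'cV_n, A *m x = 0 <-> (usubmx x = 0 /\ B *m dsubmx x = 0)) ->
  \rank A = (m + \rank B)%N.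
Proof.
move=> h.
set K1 := kermx A^T; set K2 := row_mx (0 : 'M[R]_(s * m, m)) (kermx B^T).
have e : (K1 == K2)%MS.
  apply/andP; split.
    apply/row_subP => i; set u := row i K1.
    have hu : A *m u^T = 0.
      by rewrite -[A]trmxK -trmx_mul /u -row_mul mulmx_ker row0 trmx0.
    have [hu1 hu2] := (h _).1 hu.
    have -> : u = row_mx (usubmx u^T)^T (dsubmx u^T)^T.
      by rewrite trmx_usub trmx_dsub trmxK hsubmxK.
    rewrite hu1 trmx0.
    have : ((dsubmx u^T)^T <= kermx B^T)%MS.
      by rewrite sub_kermx -trmx_mul hu2 trmx0.
    case/submxP => D ->; rewrite -[0 : 'M_(1, m)](mulmx0 _ D) -mul_mx_row.
    exact: submxMl.
  rewrite sub_kermx; apply/eqP/trmx_inj; rewrite trmx_mul trmxK trmx0.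
  apply: cols_eq0 => j; rewrite -mulmxA; apply/(h _).2.
  rewrite tr_row_mx mul_col_mx col_mxKu col_mxKd trmx0 mul0mx; split => //.
  by rewrite mulmxA -{1}[B]trmxK -trmx_mul mulmx_ker trmx0 mul0mx.
have := eqmx_rank e; rewrite /K1 /K2 rank_row_0mx !mxrank_ker !mxrank_tr.
move=> he; have h1 := rank_leq_row A; have h2 := rank_leq_row B; lia.
Qed.
End Fin.

Unset Implicit Arguments.
Local Close Scope classical_set_scope.

Theorem lemmal (R : realType) (m s : nat) (I : interval R)
  (M : R -> 'M[R]_(m + s * m)) :
  mx_continuous_on I M ->
  let P1 := smoothly_one_full I M /\ const_rank I M in
  let P2 := const_rank I M /\ (forall t, t \in I -> one_full (M t)) in
  let P3 := exists H : R -> 'M[R]_(s * m),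
      mx_continuous_on I H /\ const_rank I H /\
      forall t, t \in I -> forall x : 'cV[R]_(m + s * m),
        M t *m x = 0 <-> (usubmx x = 0 /\ H t *m dsubmx x = 0) in
  let P4 := const_rank I M /\
      forall t, t \in I -> forall x : 'cV[R]_(m + s * m),
        M t *m x = 0 ->
        row_mx (1%:M : 'M[R]_m) (0 : 'M[R]_(m, s * m)) *m x = 0 in
  [/\ P1 <-> P2, P1 <-> P3 & P1 <-> P4].
Proof.
move=> hM P1 P2 P3 P4.
have hE : is_interval [set` I]%classic := @interval_is_interval R I.
have hMc : mc [set` I]%classic M := hM.
have p1p2 : P1 -> P2.
  case=> [[T [cT [uT [H hH]]]] cr]; split => // t tI.
  by exists (T t); split; [exact: uT | exists (H t); exact: hH].
have p2p4 : P2 -> P4.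
  case=> cr h1; split => // t tI x hx.
  have [T [uT [H eH]]] := h1 t tI.
  have : T *m M t *m x = 0 by rewrite -mulmxA hx mulmx0.
  rewrite eH blockx => /eqP; rewrite col_mx_eq0 => /andP[/eqP hu _].
  by change (P0 R m s *m x = 0); rewrite P0x.
have p4p1 : P4 -> P1.
  case=> [[r hr] hk]; split; last by exists r.
  have [T [cT [uT [H eH]]]] := main_constr hE hMc hr (fun t tI => ker_sub (hk t tI)).
  by exists T; split => //; split => //; exists H.
have p1p3 : P1 -> P3.
  case=> [[T [cT [uT [H eH]]]] [r hr]].
  exists (fun t => drsubmx (T t *m M t)); split.
    exact: mc_drsub (mc_mul cT hMc).
  split.
    exists (r - m)%N => t tI.
    have e1 : \rank (T t *m M t) = \rank (M t).
      by apply: eqmx_rank; apply/eqmxP; apply: eqmxMfull; rewrite row_full_unit; exact: uT.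
    rewrite eH // rank_diag_block_mx mxrank1 in e1.
    by rewrite eH // block_mxKdr -(hr t tI) -e1 addKn.
  move=> t tI x; rewrite eH // block_mxKdr; split.
    move=> hx; have : T t *m M t *m x = 0 by rewrite -mulmxA hx mulmx0.
    by rewrite eH // blockx => /eqP; rewrite col_mx_eq0 => /andP[/eqP h1 /eqP h2].
  move=> [h1 h2].
  have e : T t *m (M t *m x) = 0 by rewrite mulmxA eH // blockx h1 h2 col_mx0.
  by rewrite -(mulKmx (uT t tI) (M t *m x)) e mulmx0.
have p3p4 : P3 -> P4.
  case=> [H [cH [[r' hr'] hk]]]; split.
    by exists (m + r')%N => t tI; rewrite (rank_from_ker (hk t tI)) hr'.
  move=> t tI x hx; have [h1 _] := (hk t tI x).1 hx.
  by change (P0 R m s *m x = 0); rewrite P0x.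
split; split => h.
- exact: p1p2.
- exact: p4p1 (p2p4 h).
- exact: p1p3.
- exact: p4p1 (p3p4 h).
- exact: p2p4 (p1p2 h).
- exact: p4p1.
Qed.
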